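(* In the situation described in the context: (1) for each $r\in[1,\sigma]$, $V=X_r\oplus X_r^\perp$. (2) Assume moreover that $g$ is unipotent and put $N=g-1$, $p_{\sigma+1}=\kappa/2$, and $\Lambda_k=\sum_{r\in[1,\sigma+1]}\max(2p_r-k,0)$ for $k\ge 0$. Then $\dim N^kV\ge\Lambda_k$ for every $k\ge0$, with equality for $k=0$. (3) If $\dim N^kV=\Lambda_k$ for all $k\ge0$, then each $X_r$ ($r\in[1,\sigma+1]$) is $g$-stable and $(X_r,X_{r'})=0$ for all $r\ne r'$ in $[1,\sigma+1]$.
   Context: Let $\mathbf k$ be algebraically closed of characteristic $p$. Let $V$ be a $\mathbf k$-vector space of dimension $\mathfrak n\ge3$, $\kappa\in\{0,1\}$ with $\kappa\equiv\mathfrak n\pmod2$, $n=(\mathfrak n-\kappa)/2$, with a bilinear form $(\,,)$ and quadratic form $Q$ such that either (i) $Q=0$, $(x,x)=0$ for all $x$, $V^\perp=0$; or (ii) $Q\neq0$, $(x,y)=Q(x+y)-Q(x)-Q(y)$, $Q|_{V^\perp}$ injective. $Is(V)$ is the group of $g\in GL(V)$ preserving $(\,,)$ and $Q$. $\mathcal F$ is the set of flags $V_*=(0=V_0\subset\dots\subset V_{\mathfrak n}=V)$, $\dim V_i=i$, with $Q|_{V_i}=0$ and $V_i^\perp=V_{\mathfrak n-i}$ for $i\in[0,n]$. For $V_*,V'_*\in\mathcal F$, $a_{V_*,V'_*}$ is the permutation $i\mapsto a_i$ of $[1,\mathfrak n]$ where $X_i=\{j: V'_i\cap V_j\ne V'_i\cap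 V_{j-1}\}$ and $X_i=X_{i-1}\sqcup\{a_i\}$. For $p_*=(p_1\ge\dots\ge p_\sigma)$, integers $\ge1$ with sum $n$, $p_{<r}=\sum_{r'<r}p_{r'}$, $p_{\le r}=\sum_{r'\le r}p_{r'}$, and $w_{p_*}$ is the permutation with cycles $p_{<r}+1\mapsto\dots\mapsto p_{\le r}\mapsto\mathfrak n-p_{<r}\mapsto\dots\mapsto\mathfrak n-p_{\le r}+1\mapsto p_{<r}+1$ ($r\in[1,\sigma]$), fixing $n+1$ if $\kappa=1$. Situation: $V_*,V'_*\in\mathcal F$ with $a_{V_*,V'_*}=w_{p_*}$, $g\in Is(V)$ with $gV_*=V'_*$, and $v_1,\dots,v_\sigma\in V$ (and $v_{\sigma+1}$ if $\kappa=1$) such that, writing $Z_k$ for the span of $v_k,gv_k,\dots,g^{p_k-1}v_k$: $V_{p_{<r}+i}=Z_1+\dots+Z_{r-1}+\mathrm{span}(v_r,\dots,g^{i-1}v_r)$ for $i\in[0,p_r]$; $(g^iv_t,v_r)=0$ for $t<r\le\sigma$, $i\in[-p_t,p_t-1]$; $(v_r,g^iv_r)=0$ for $|i|\le p_r-1$, $Q(v_r)=0$, $(v_r,g^{p_r}v_r)=1$; and, if $\kappa=1$, $(g^iv_t,v_{\sigma+1})=0$ for $t\in[1,\sigma]$, $i\in[-p_t,p_t-1]$ and $Q(v_{\sigma+1})=1$. (Such vectors exist and the vectors $g^jv_t$, $t\in[1,\sigma]$, $j\in[-p_t,p_t-1]$, together with $v_{\sigma+1}$ if $\kappa=1$, form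 a basis of $V$.) For $r\in[1,\sigma]$, $X_r$ is the span of $g^{-p_r+i}v_r$, $i\in[0,2p_r-1]$; $X_{\sigma+1}=0$ if $\kappa=0$ and $X_{\sigma+1}=\mathbf k v_{\sigma+1}$ if $\kappa=1$. *)

(* Defs.v *)
(* V = 'rV[K]_nn (row vectors); a linear map g acts by x |-> x *m g;
   subspaces are represented by (square) matrices via their row space (mxalgebra). *)
From HB Require Import structures.
From mathcomp Require Import all_boot all_order all_algebra.
Set Implicit Arguments. Unset Strict Implicit. Unset Printing Implicit Defensive.
Import GRing.Theory.
Local Open Scope ring_scope.

Definition bform (K : fieldType) (nn : nat) (B : 'M[K]_nn) (x y : 'rV[K]_nn) : K :=
  (x *m B *m y^T) 0 0.

Definition perpmx (K : fieldType) (nn : nat) (B U : 'M[K]_nn) : 'M[K]_nn :=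
  kermx ((U *m B)^T).

Definition spanmx (K : fieldType) (nn : nat) (s : seq 'rV[K]_nn) : 'M[K]_nn :=
  (\sum_(x <- s) <<x>>)%MS.

Definition gpow (K : fieldType) (nn : nat) (g : 'M[K]_nn) (i : int) : 'M[K]_nn :=
  match i with Posz m => g ^+ m | Negz m => invmx g ^+ m.+1 end.

(* p_k (1-indexed) and p_{<r} *)
Definition pk (p : seq nat) (k : nat) : nat := nth 0%N p k.-1.
Definition plt (p : seq nat) (r : nat) : nat := sumn (take r.-1 p).

(* p_* : p_1 >= ... >= p_sigma >= 1 with sum n = (nn - kappa)/2 = nn./2 *)
Definition partition_of (p : seq nat) (nn : nat) : Prop :=
  sorted geq p /\ all (fun x => 0 < x)%N p /\ sumn p = nn./2.

Definition Zsp (K : fieldType) (nn : nat) (g : 'M[K]_nn) (v : nat -> 'rV[K]_nn)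
  (p : seq nat) (k : nat) : 'M[K]_nn :=
  spanmx [seq v k *m g ^+ j | j <- iota 0 (pk p k)].

(* X_r (r in [1,sigma]) = span of g^{-p_r+i} v_r, i in [0,2p_r-1];
   X_{sigma+1} = 0 if kappa = 0, k v_{sigma+1} if kappa = 1 (kappa = odd nn) *)
Definition Xsp (K : fieldType) (nn : nat) (g : 'M[K]_nn) (v : nat -> 'rV[K]_nn)
  (p : seq nat) (r : nat) : 'M[K]_nn :=
  if (r <= size p)%N then
    spanmx [seq v r *m gpow g (j%:Z - (pk p r)%:Z) | j <- iota 0 (2 * pk p r)]
  else if odd nn then <<v r>>%MS else 0.

Fixpoint wp_aux (p : seq nat) (off nn i : nat) : nat :=
  match p with
  | [::] => i
  | pr :: p' =>
    if (off < i <= off + pr)%N then (if i == (off + pr)%N then (nn - off)%N else i.+1)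
    else if (nn - off - pr < i <= nn - off)%N then
      (if i == (nn - off - pr).+1 then off.+1 else i.-1)
    else wp_aux p' (off + pr) nn i
  end.
Definition wp (p : seq nat) (nn : nat) (i : nat) : nat := wp_aux p 0 nn i.

(* j is in X_i  <->  V'_i \cap V_j <> V'_i \cap V_{j-1} *)
Definition jump (K : fieldType) (nn : nat) (Vf Vf' : nat -> 'M[K]_nn) (i j : nat) : bool :=
  ~~ ((Vf' i :&: Vf j) == (Vf' i :&: Vf j.-1))%MS.

(* a_{V_*,V'_*} = w : for i in [1,nn], X_i = X_{i-1} \sqcup {w i} (X_i subset of [1,nn]) *)
Definition relpos_is (K : fieldType) (nn : nat) (Vf Vf' : nat -> 'M[K]_nn)
  (w : nat -> nat) : Prop :=
  forall i, (1 <= i <= nn)%N ->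
    [/\ (1 <= w i <= nn)%N, ~~ jump Vf Vf' i.-1 (w i) &
        forall j, (1 <= j <= nn)%N -> jump Vf Vf' i j = jump Vf Vf' i.-1 j || (j == w i)].

Definition form_data (K : fieldType) (nn : nat) (B : 'M[K]_nn) (Q : 'rV[K]_nn -> K) : Prop :=
  (forall (a : K) x, Q (a *: x) = a ^+ 2 * Q x) /\
  ( [/\ (forall x, Q x = 0), (forall x, bform B x x = 0) & (perpmx B 1%:M == (0 : 'M[K]_nn))%MS ]
  \/ [/\ (exists x, Q x != 0),
         (forall x y, bform B x y = Q (x + y) - Q x - Q y) &
         (forall y z, (y <= perpmx B 1%:M)%MS -> (z <= perpmx B 1%:M)%MS ->
                      Q y = Q z -> y = z) ]).

Definition in_flagF (K : fieldType) (nn : nat) (B : 'M[K]_nn) (Q : 'rV[K]_nn -> K)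
  (Vf : nat -> 'M[K]_nn) : Prop :=
  [/\ (forall i, (i <= nn)%N -> \rank (Vf i) = i),
      (forall i, (i < nn)%N -> (Vf i <= Vf i.+1)%MS),
      (Vf 0%N == (0 : 'M[K]_nn))%MS, (Vf nn == 1%:M)%MS &
      (forall i, (i <= nn./2)%N ->
         (forall x, (x <= Vf i)%MS -> Q x = 0) /\ (perpmx B (Vf i) == Vf (nn - i)%N)%MS)].

Definition in_Is (K : fieldType) (nn : nat) (B : 'M[K]_nn) (Q : 'rV[K]_nn -> K)
  (g : 'M[K]_nn) : Prop :=
  [/\ g \in unitmx, (forall x y, bform B (x *m g) (y *m g) = bform B x y) &
      (forall x, Q (x *m g) = Q x)].

(* Lambda_k = sum_{r in [1,sigma+1]} max(2 p_r - k, 0), with 2 p_{sigma+1} = kappa *)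
Definition Lambda (p : seq nat) (nn k : nat) : nat :=
  (sumn [seq (2 * pr - k)%N | pr <- p] + (odd nn - k))%N.

(* Main.v *)
Require Import Defs.
From HB Require Import structures.
From mathcomp Require Import all_boot all_order all_algebra.
Import Order.TTheory GRing.Theory Num.Theory.
Set Implicit Arguments. Unset Strict Implicit. Unset Printing Implicit Defensive.
Local Open Scope ring_scope.
From Stdlib Require Import Lia.

Ltac natlia :=
  repeat match goal with
  | H : is_true (_ <= _)%N |- _ => revert H
  | H : is_true (~~ (_ <= _)%N) |- _ => revert H
  | H : is_true (_ == _ :> nat) |- _ => revert H
  | H : (_ = _ :> nat) |- _ => revert H
  end;
  rewrite -?plusE -?minusE -?multE;
  repeat (let H := fresh "H" in intro H;
    match type of H with
    | is_true (_ <= _)%N => move/ssrnat.leP: H => H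
    | is_true (~~ (_ <= _)%N) => rewrite -ltnNge in H; move/ssrnat.leP: H => H
    | is_true (_ == _) => move/eqnP: H; rewrite -?plusE -?minusE -?multE => H
    | (_ = _ :> nat) => move: H; rewrite -?plusE -?minusE -?multE => H
    | _ => idtac end);
  try (match goal with |- is_true (_ <= _)%N => apply/ssrnat.leP end);
  try (match goal with |- is_true (_ == _) => apply/eqnP end);
  try (match goal with |- is_true (~~ (_ <= _)%N) => rewrite -ltnNge; apply/ssrnat.leP end);
  lia.


Lemma bformDl (K : fieldType) nn (B : 'M[K]_nn) x y z :
  bform B (x + y) z = bform B x z + bform B y z.
Proof. by rewrite /bform !mulmxDl mxE. Qed.
Lemma bformZl (K : fieldType) nn (B : 'M[K]_nn) a x z :
  bform B (a *: x) z = a * bform B x z.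
Proof. by rewrite /bform -!scalemxAl mxE. Qed.
Lemma bformNl (K : fieldType) nn (B : 'M[K]_nn) x z :
  bform B (- x) z = - bform B x z.
Proof. by rewrite -scaleN1r bformZl mulN1r. Qed.
Lemma bformBl (K : fieldType) nn (B : 'M[K]_nn) x y z :
  bform B (x - y) z = bform B x z - bform B y z.
Proof. by rewrite bformDl bformNl. Qed.
Lemma bform0l (K : fieldType) nn (B : 'M[K]_nn) z : bform B 0 z = 0.
Proof. by rewrite /bform !mul0mx mxE. Qed.
Lemma bformDr (K : fieldType) nn (B : 'M[K]_nn) x y z :
  bform B z (x + y) = bform B z x + bform B z y.
Proof. by rewrite /bform linearD /= mulmxDr mxE. Qed.
Lemma bformZr (K : fieldType) nn (B : 'M[K]_nn) a x z :
  bform B z (a *: x) = a * bform B z x.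
Proof. by rewrite /bform linearZ /= -scalemxAr mxE. Qed.
Lemma bform0r (K : fieldType) nn (B : 'M[K]_nn) z : bform B z 0 = 0.
Proof. by rewrite /bform trmx0 mulmx0 mxE. Qed.
Lemma bform_suml (K : fieldType) nn (B : 'M[K]_nn) (I : Type) (s : seq I) F z :
  bform B (\sum_(i <- s) F i) z = \sum_(i <- s) bform B (F i) z.
Proof.
elim: s => [|a s IH]; first by rewrite !big_nil bform0l.
by rewrite !big_cons bformDl IH.
Qed.
Lemma bform_sumr (K : fieldType) nn (B : 'M[K]_nn) (I : Type) (s : seq I) F z :
  bform B z (\sum_(i <- s) F i) = \sum_(i <- s) bform B z (F i).
Proof.
elim: s => [|a s IH]; first by rewrite !big_nil bform0r.
by rewrite !big_cons bformDr IH.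
Qed.

Lemma form_sym (K : fieldType) nn (B : 'M[K]_nn) Q : form_data B Q ->
  exists e : K, e != 0 /\ forall x y, bform B y x = e * bform B x y.
Proof.
case=> _ [[_ Halt _]|[_ Hpol _]].
  exists (-1); split; first by rewrite oppr_eq0 oner_eq0.
  move=> x y; have := Halt (x + y).
  rewrite !bformDl !bformDr Halt Halt add0r addr0 => /eqP.
  by rewrite addr_eq0 => /eqP ->; rewrite mulN1r opprK.
exists 1; split; first exact: oner_neq0.
by move=> x y; rewrite mul1r !Hpol [y + x]addrC -!addrA [- Q y - _]addrC.
Qed.

Lemma gpow_eq (K : fieldType) n (g : 'M[K]_n.+1) i : gpow g i = g ^ i.
Proof. by case: i => m //; rewrite /gpow /exprz -exprVn. Qed.

Lemma gpowD (K : fieldType) nn (g : 'M[K]_nn) a b : g \in unitmx ->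
  gpow g (a + b) = gpow g a *m gpow g b.
Proof.
case: nn g => [|n] g gu; first by rewrite [LHS]thinmx0 [RHS]thinmx0.
by rewrite !gpow_eq mulmxE exprzDr.
Qed.

Lemma gpow0 (K : fieldType) nn (g : 'M[K]_nn) : gpow g 0 = 1%:M.
Proof. by []. Qed.

Lemma gpowN (K : fieldType) nn (g : 'M[K]_nn) a : g \in unitmx ->
  gpow g a *m gpow g (- a) = 1%:M.
Proof. by move=> gu; rewrite -gpowD // subrr. Qed.

Lemma iso_pos (K : fieldType) nn (B g : 'M[K]_nn) :
  (forall x y, bform B (x *m g) (y *m g) = bform B x y) ->
  forall m x y, bform B (x *m g ^+ m) (y *m g ^+ m) = bform B x y.
Proof.
move=> hiso; elim=> [|m IH] x y; first by rewrite expr0 !mulmx1.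
by rewrite exprSr -!mulmxE !mulmxA hiso IH.
Qed.

Lemma iso_gpow (K : fieldType) nn (B g : 'M[K]_nn) : g \in unitmx ->
  (forall x y, bform B (x *m g) (y *m g) = bform B x y) ->
  forall i x y, bform B (x *m gpow g i) (y *m gpow g i) = bform B x y.
Proof.
move=> gu hiso; case=> m x y; first exact: iso_pos.
rewrite -(iso_pos hiso m.+1) -!mulmxA.
have -> : gpow g (Negz m) *m g ^+ m.+1 = 1%:M.
  by rewrite -[g ^+ m.+1]/(gpow g (Posz m.+1)) -gpowD // NegzE addNr.
by rewrite !mulmx1.
Qed.

Lemma bform_shift (K : fieldType) nn (B g : 'M[K]_nn) : g \in unitmx ->
  (forall x y, bform B (x *m g) (y *m g) = bform B x y) ->
  forall a b x y, bform B (x *m gpow g a) (y *m gpow g b) = bform B (x *m gpow g (a - b)) y.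
Proof.
move=> gu hiso a b x y.
by rewrite -[RHS](iso_gpow gu hiso b) -mulmxA -gpowD // subrK.
Qed.

Lemma spanmx_cons (K : fieldType) nn (x : 'rV[K]_nn) s :
  spanmx (x :: s) = (<<x>> + spanmx s)%MS.
Proof. by rewrite /spanmx big_cons. Qed.

Lemma span_comb (K : fieldType) nn (I : eqType) (s : seq I) (F : I -> 'rV[K]_nn) u :
  uniq s -> (u <= spanmx [seq F i | i <- s])%MS ->
  exists c : I -> K, u = \sum_(i <- s) c i *: F i.
Proof.
elim: s u => [|a s IH] u /=.
  move=> _; rewrite /spanmx big_nil submx0 => /eqP ->.
  by exists (fun _ => 0); rewrite big_nil.
case/andP=> nas us; rewrite spanmx_cons => /sub_addsmxP [[u1 u2] /= ->].
have /sub_rVP [al Hal] : (u1 *m <<F a>> <= F a)%MS by rewrite (submx_trans (submxMl _ _)) // genmxE.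
have [c Hc] := IH _ us (submxMl u2 _).
exists (fun i => if i == a then al else c i).
rewrite big_cons eqxx Hal Hc; congr (_ + _).
apply: eq_big_seq => i iS; case: eqP => // eia.
by move: nas; rewrite -eia iS.
Qed.

Lemma mem_span (K : fieldType) nn (I : eqType) (s : seq I) (F : I -> 'rV[K]_nn) i :
  i \in s -> (F i <= spanmx [seq F i | i <- s])%MS.
Proof.
elim: s => [|a s IH] //=; rewrite inE spanmx_cons => /orP [/eqP ->|iS].
  by apply: submx_trans (addsmxSl _ _); rewrite genmxE.
by rewrite (submx_trans (IH iS)) // addsmxSr.
Qed.

Lemma comb_span (K : fieldType) nn (I : eqType) (s : seq I) (F : I -> 'rV[K]_nn) c :
  ((\sum_(i <- s) c i *: F i)%R <= spanmx [seq F i | i <- s])%MS.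
Proof.
rewrite big_seq; apply: summx_sub => i iS.
by apply: scalemx_sub; apply: mem_span.
Qed.

Lemma sums_dec (K : fieldType) nn (I : eqType) (s : seq I) (A : I -> 'M[K]_nn) u :
  uniq s -> (u <= \sum_(i <- s) A i)%MS ->
  exists w : I -> 'rV[K]_nn, (forall i, i \in s -> (w i <= A i)%MS) /\ u = \sum_(i <- s) w i.
Proof.
elim: s u => [|a s IH] u /=.
  move=> _; rewrite big_nil submx0 => /eqP ->.
  by exists (fun _ => 0); rewrite big_nil.
case/andP=> nas us; rewrite big_cons => /sub_addsmxP [[u1 u2] /= ->].
have [w [Hw1 Hw2]] := IH _ us (submxMl u2 _).
exists (fun i => if i == a then u1 *m A a else w i); split.
  move=> i; rewrite inE; case: eqP => [->|_] /= ; first by rewrite submxMl.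
  exact: Hw1.
rewrite big_cons eqxx Hw2; congr (_ + _).
apply: eq_big_seq => i iS; case: eqP => // eia.
by move: nas; rewrite -eia iS.
Qed.

Lemma mem_sums (K : fieldType) nn (I : eqType) (s : seq I) (A : I -> 'M[K]_nn) i :
  i \in s -> (A i <= \sum_(i <- s) A i)%MS.
Proof.
elim: s => [|a s IH] //=; rewrite inE big_cons => /orP [/eqP ->|iS].
  exact: addsmxSl.
by rewrite (submx_trans (IH iS)) // addsmxSr.
Qed.

Definition tord (I : eqType) (s : seq I) (le : I -> I -> bool) : Prop :=
  [/\ (forall i j, i \in s -> j \in s -> le i j || le j i),
      (forall i j l, i \in s -> j \in s -> l \in s -> le i j -> le j l -> le i l) &
      (forall i j, i \in s -> j \in s -> le i j -> le j i -> i = j)].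

Lemma tord_sub (I : eqType) (s s' : seq I) le : {subset s' <= s} -> tord s le -> tord s' le.
Proof.
move=> ss [H1 H2 H3]; split.
- by move=> i j /ss ? /ss ?; apply: H1.
- by move=> i j l /ss ? /ss ? /ss ?; apply: H2.
- by move=> i j /ss ? /ss ?; apply: H3.
Qed.

Lemma exists_min (I : eqType) (s : seq I) le :
  tord s le -> s != [::] -> exists2 i0, i0 \in s & forall i, i \in s -> le i0 i.
Proof.
elim: s => [|a s IH] // Ht _.
have Hrefl : le a a by have [H1 _ _] := Ht; have := H1 a a; rewrite mem_head => /(_ isT isT); rewrite orbb.
case: (altP (s =P [::])) => [->|sne].
  by exists a; rewrite ?inE // => i; rewrite inE => /eqP ->.
have Ht' : tord s le by apply: tord_sub Ht => i iS; rewrite inE iS orbT.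
have [i1 i1s Hi1] := IH Ht' sne.
have [H1 H2 H3] := Ht.
have i1s' : i1 \in a :: s by rewrite inE i1s orbT.
case/orP: (H1 a i1 (mem_head _ _) i1s') => H.
  exists a; first by rewrite inE eqxx.
  move=> i; rewrite inE => /orP [/eqP ->//|iS].
  by apply: H2 H (Hi1 _ iS) => //; rewrite ?mem_head ?inE ?iS ?orbT.
exists i1 => // i; rewrite inE => /orP [/eqP ->//|iS].
exact: Hi1.
Qed.

Lemma LT (K : fieldType) nn (B : 'M[K]_nn) (I : eqType) (s : seq I)
  (f h : I -> 'rV[K]_nn) (le : I -> I -> bool) (c : I -> K) :
  uniq s -> tord s le ->
  (forall i j, i \in s -> j \in s -> bform B (f j) (h i) != 0 -> le j i) ->
  (forall i, i \in s -> bform B (f i) (h i) != 0) ->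
  (forall i, i \in s -> bform B (\sum_(j <- s) c j *: f j) (h i) = 0) ->
  forall j, j \in s -> c j = 0.
Proof.
move=> us Ht Htri Hdiag Hsum j js; apply/eqP; apply: contraT => cj.
set T := [seq i <- s | c i != 0].
have Tne : T != [::].
  by apply/eqP => /(congr1 (fun l => j \in l)); rewrite mem_filter cj js.
have HtT : tord T le by apply: tord_sub Ht => i; rewrite mem_filter => /andP [].
have [i0 i0T Hmin] := exists_min HtT Tne.
move: (i0T); rewrite mem_filter => /andP [ci0 i0s].
have := Hsum _ i0s; rewrite bform_suml (bigD1_seq i0) //= big1_seq.
  by rewrite addr0 bformZl => /eqP; rewrite mulf_eq0 (negbTE ci0) (negbTE (Hdiag _ i0s)).
move=> i /andP [ni0 iS]; rewrite bformZl.
case: (eqVneq (c i) 0) => [->|ci]; first by rewrite mul0r.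
case: (eqVneq (bform B (f i) (h i0)) 0) => [->|bi]; first by rewrite mulr0.
have H1 := Htri _ _ i0s iS bi.
have H2 : le i0 i by apply: Hmin; rewrite mem_filter ci iS.
have [_ _ H3] := Ht.
by move: ni0; rewrite (H3 _ _ iS i0s H1 H2) eqxx.
Qed.

Lemma LT_free (K : fieldType) nn (B : 'M[K]_nn) (I : eqType) (s : seq I)
  (f h : I -> 'rV[K]_nn) (le : I -> I -> bool) (d : I) :
  uniq s -> tord s le ->
  (forall i j, i \in s -> j \in s -> bform B (f j) (h i) != 0 -> le j i) ->
  (forall i, i \in s -> bform B (f i) (h i) != 0) ->
  \rank (\matrix_(i < size s) f (nth d s i)) = size s.
Proof.
move=> us Ht Htri Hdiag.
set A := \matrix_(i < size s) f (nth d s i).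
apply/eqP; rewrite -[_ == _]/(row_free A) -kermx_eq0 -submx0.
apply/row_subP => r; set x := row r (kermx A).
have xA : x *m A = 0 by apply/sub_kermxP; exact: row_sub.
have nS (i : 'I_(size s)) : nth d s i \in s by apply: mem_nth.
have x0 : forall i, x 0 i = 0.
  move=> i; apply: (@LT K nn B _ (enum 'I_(size s)) (fun i => f (nth d s i)) (fun i => h (nth d s i))
    (fun i j => le (nth d s i) (nth d s j)) (fun i => x 0 i) (enum_uniq _)); last by rewrite mem_enum.
  - have [H1 H2 H3] := Ht; split.
    + by move=> i1 i2 _ _; apply: H1.
    + by move=> i1 i2 i3 _ _ _; apply: H2.
    + move=> i1 i2 _ _ l1 l2; have /eqP := H3 _ _ (nS _) (nS _) l1 l2.
      by rewrite nth_uniq // => /eqP /val_inj.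
  - by move=> i1 i2 _ _; apply: Htri.
  - by move=> i1 _; apply: Hdiag.
  move=> i1 _; rewrite big_enum /=.
  have -> : \sum_i x 0 i *: f (nth d s i) = x *m A.
    by rewrite mulmx_sum_row; apply: eq_bigr => i2 _; rewrite rowK.
  by rewrite xA bform0l.
by rewrite submx0; apply/eqP/rowP => i; rewrite x0 mxE.
Qed.
Lemma sums_sub (K : fieldType) nn m (I : eqType) (s : seq I) (A : I -> 'M[K]_nn) (M : 'M[K]_(m, nn)) :
  (forall i, i \in s -> (A i <= M)%MS) -> (\sum_(i <- s) A i <= M)%MS.
Proof.
elim: s => [|a s IH] H; first by rewrite big_nil sub0mx.
rewrite big_cons addsmx_sub H ?mem_head //=; apply: IH => i iS.
by apply: H; rewrite inE iS orbT.
Qed.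


Lemma LT_rank (K : fieldType) nn (B : 'M[K]_nn) (I : eqType) (s : seq I)
  (f h : I -> 'rV[K]_nn) (le : I -> I -> bool) (M : 'M[K]_nn) :
  uniq s -> tord s le ->
  (forall i j, i \in s -> j \in s -> bform B (f j) (h i) != 0 -> le j i) ->
  (forall i, i \in s -> bform B (f i) (h i) != 0) ->
  (forall i, i \in s -> (f i <= M)%MS) ->
  (size s <= \rank M)%N /\ ((\rank M <= size s)%N -> (M <= spanmx [seq f i | i <- s])%MS).
Proof.
move=> us kinj Htri Hdiag HM.
case: s us kinj Htri Hdiag HM => [|d s0]; first by move=> *; split=> //; rewrite leqn0 mxrank_eq0 => /eqP ->; rewrite sub0mx.
set s := d :: s0 => us kinj Htri Hdiag HM.
have rA := LT_free d us kinj Htri Hdiag.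
set A := \matrix_(i < size s) f (nth d s i) in rA.
have AS : (A <= spanmx [seq f i | i <- s])%MS.
  by apply/row_subP => i; rewrite rowK; apply: mem_span; apply: mem_nth.
have SM : (spanmx [seq f i | i <- s] <= M)%MS.
  rewrite /spanmx big_map; apply: sums_sub => i iS; rewrite genmxE; exact: HM.
have := mxrankS AS; rewrite rA => H1.
split; first by apply: leq_trans H1 (mxrankS SM).
move=> H2; have /mxrank_leqif_sup: (spanmx [seq f i | i <- s] <= M)%MS by [].
by move=> [lee <-]; rewrite eqn_leq lee /=; apply: leq_trans H2 H1.
Qed.

Lemma zle (a b c d : nat) : (a%:Z - b%:Z <= c%:Z - d%:Z) = (a + d <= c + b)%N.
Proof. by rewrite lerBlDr addrAC lerBrDr -!PoszD lez_nat. Qed.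
Lemma zlt (a b c d : nat) : (a%:Z - b%:Z < c%:Z - d%:Z) = (a + d < c + b)%N.
Proof. by rewrite ltrBlDr addrAC ltrBrDr -!PoszD ltz_nat. Qed.

Definition Setting (K : fieldType) nn (B g : 'M[K]_nn) (v : nat -> 'rV[K]_nn) (p : seq nat) (e : K) : Prop :=
  [/\ g \in unitmx,
      (forall x y, bform B (x *m g) (y *m g) = bform B x y),
      e != 0 /\ (forall x y, bform B y x = e * bform B x y),
      (forall t r, (1 <= t)%N -> (t <= r)%N -> (r <= size p)%N -> (pk p r <= pk p t)%N) /\
      (forall t, (1 <= t <= size p)%N -> (0 < pk p t)%N) &
      (forall t r, (1 <= t)%N -> (t < r)%N -> (r <= size p)%N -> forall a b : nat,
          (b <= a + pk p t)%N -> (a < b + pk p t)%N -> bform B (v t *m gpow g (a%:Z - b%:Z)) (v r) = 0) /\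
      (forall r, (1 <= r <= size p)%N ->
         (forall a b : nat, (a < b + pk p r)%N -> (b < a + pk p r)%N ->
            bform B (v r) (v r *m gpow g (a%:Z - b%:Z)) = 0)
         /\ bform B (v r) (v r *m g ^+ pk p r) = 1)].

Definition Ev (K : fieldType) nn (g : 'M[K]_nn) (v : nat -> 'rV[K]_nn) (p : seq nat) t (j : nat) :=
  v t *m gpow g (j%:Z - (pk p t)%:Z).

Lemma bform_movel (K : fieldType) nn (B g : 'M[K]_nn) : g \in unitmx ->
  (forall x y, bform B (x *m g) (y *m g) = bform B x y) ->
  forall a x y, bform B (x *m gpow g a) y = bform B x (y *m gpow g (- a)).
Proof.
move=> gu hiso a x y.
by rewrite -[x in RHS]mulmx1 -(gpow0 g) (bform_shift gu hiso) sub0r opprK.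
Qed.

Lemma G0 (K : fieldType) nn (B g : 'M[K]_nn) v p e : Setting B g v p e ->
  forall t j r j', (1 <= t <= size p)%N -> (j < 2 * pk p t)%N -> (1 <= r <= size p)%N ->
  bform B (Ev g v p t j) (v r *m g ^+ j') != 0 ->
  (j + pk p r < j' + pk p t)%N || ((j + pk p r == j' + pk p t)%N && (r <= t)%N).
Proof.
case=> gu hiso [e0 hsym] [hmono hpos] [hcross hself] t j r j' /andP[t1 tS] jlt /andP[r1 rS].
rewrite /Ev -[g ^+ j']/(gpow g j') (bform_shift gu hiso).
have -> : j%:Z - (pk p t)%:Z - j'%:Z = j%:Z - (pk p t + j')%:Z by rewrite PoszD opprD addrA.
case: (ltngtP t r) => [tr|rt|ert] H.
- have Hm := hmono t r t1 (ltnW tr) rS.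
  have : ~~ (j' <= j)%N.
    apply: contra H => jj; apply/eqP; apply: hcross => //; natlia.
  move=> Hn; apply/orP; left; natlia.
- have Hm := hmono r t r1 (ltnW rt) tS.
  have H' : bform B (v r *m gpow g ((pk p t + j')%:Z - j%:Z)) (v t) != 0.
    by rewrite (bform_movel gu hiso) opprB hsym mulf_neq0.
  have : ~~ ((j <= (pk p t + j') + pk p r)%N && ((pk p t + j') < j + pk p r)%N).
    apply: contra H' => /andP [h1 h2]; apply/eqP; apply: hcross => //.
  rewrite negb_and => Hn.
  have Hle : (j + pk p r <= j' + pk p t)%N.
    case/orP: Hn => Hn; natlia.
  by rewrite andbT orbC -leq_eqVlt.
- subst r.
  have [hs _] : _ /\ _ := hself t (introT andP (conj t1 tS)).
  rewrite (bform_movel gu hiso) opprB in H.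
  have : ~~ (j' < j)%N.
    apply: contra H => jj; apply/eqP; apply: hs; natlia.
  move=> Hn; have Hl : (j + pk p t <= j' + pk p t)%N by natlia.
  by move: Hl; rewrite leq_eqVlt orbC andbT.
Qed.

Definition gle (p : seq nat) (a b : nat * nat) : bool :=
  (a.2 + pk p b.1 < b.2 + pk p a.1)%N || ((a.2 + pk p b.1 == b.2 + pk p a.1)%N && (b.1 <= a.1)%N).

Lemma gle_total p (t j r j' : nat) : gle p (t, j) (r, j') || gle p (r, j') (t, j).
Proof.
rewrite /gle /=.
by case: (ltngtP (j + pk p r) (j' + pk p t)) => H //=; exact: leq_total.
Qed.

Lemma gle_trans p (t1 j1 t2 j2 t3 j3 : nat) :
  gle p (t1, j1) (t2, j2) -> gle p (t2, j2) (t3, j3) -> gle p (t1, j1) (t3, j3).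
Proof.
rewrite /gle /=.
case/orP=> [h1|/andP [h1 h1']]; case/orP=> [h2|/andP [h2 h2']].
+ by apply/orP; left; natlia.
+ by apply/orP; left; natlia.
+ by apply/orP; left; natlia.
+ by apply/orP; right; apply/andP; split; [natlia|apply: leq_trans h2' h1'].
Qed.

Lemma gle_anti p (t j r j' : nat) :
  gle p (t, j) (r, j') -> gle p (r, j') (t, j) -> (t, j) = (r, j').
Proof.
rewrite /gle /=.
case/orP=> [h1|/andP [h1 h1']]; case/orP=> [h2|/andP [h2 h2']].
+ by exfalso; natlia.
+ by exfalso; natlia.
+ by exfalso; natlia.
+ have etr : t = r by apply/eqP; rewrite eqn_leq h1' h2'.
  subst r; congr (_, _); natlia.
Qed.

Lemma gle_tord p s : tord s (gle p).
Proof.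
split.
- by move=> [t j] [r j'] _ _; apply: gle_total.
- by move=> [t1 j1] [t2 j2] [t3 j3] _ _ _; apply: gle_trans.
- by move=> [t j] [r j'] _ _; apply: gle_anti.
Qed.

Lemma Ev_g (K : fieldType) nn (g : 'M[K]_nn) v p t j : g \in unitmx ->
  Ev g v p t j *m g = Ev g v p t j.+1.
Proof.
move=> gu; rewrite /Ev -mulmxA.
have -> : gpow g (j%:Z - (pk p t)%:Z) *m g = gpow g (j%:Z - (pk p t)%:Z + 1)
  by rewrite (gpowD (j%:Z - (pk p t)%:Z) 1 gu); congr (_ *m _); exact: (esym (expr1 g)).
by congr (_ *m gpow g _); rewrite -addn1 PoszD addrAC.
Qed.

Lemma Ev_N (K : fieldType) nn (g : 'M[K]_nn) v p t j k : g \in unitmx ->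
  Ev g v p t j *m (g - 1%:M) ^+ k.+1 = Ev g v p t j.+1 *m (g - 1%:M) ^+ k - Ev g v p t j *m (g - 1%:M) ^+ k.
Proof.
move=> gu; rewrite exprS -mulmxE mulmxA mulmxBr mulmx1 Ev_g //.
by rewrite mulmxBl.
Qed.

Lemma Gdiag0 (K : fieldType) nn (B g : 'M[K]_nn) v p e : Setting B g v p e ->
  forall r j', (1 <= r <= size p)%N -> bform B (Ev g v p r j') (v r *m g ^+ j') = 1.
Proof.
case=> gu hiso [e0 hsym] [hmono hpos] [hcross hself] r j' rr.
rewrite /Ev -[g ^+ j']/(gpow g j') (bform_shift gu hiso).
rewrite addrAC subrr add0r (bform_movel gu hiso) opprK.
by have [_ ->] := hself r rr.
Qed.

Lemma Gk (K : fieldType) nn (B g : 'M[K]_nn) v p e : Setting B g v p e ->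
  forall k t j r j', (1 <= t <= size p)%N -> (j + k < 2 * pk p t)%N -> (1 <= r <= size p)%N ->
  bform B (Ev g v p t j *m (g - 1%:M) ^+ k) (v r *m g ^+ j') != 0 -> gle p (t, j) (r, j').
Proof.
move=> hS; have [gu _ _ _ _] := hS.
elim=> [|k IH] t j r j' tt jlt rr.
  by rewrite expr0 mulmx1 => H; apply: (G0 hS) => //; rewrite addn0 in jlt.
rewrite Ev_N // bformBl => H.
case: (eqVneq (bform B (Ev g v p t j.+1 *m (g - 1%:M) ^+ k) (v r *m g ^+ j')) 0) => [H0|H1].
  rewrite H0 sub0r oppr_eq0 in H.
  by apply: IH H => //; natlia.
apply: (@gle_trans p t j t j.+1 r j'); last by apply: IH H1 => //; natlia.
by rewrite /gle /= addSn ltnSn.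
Qed.

Lemma Gkdiag (K : fieldType) nn (B g : 'M[K]_nn) v p e : Setting B g v p e ->
  forall k r j', (1 <= r <= size p)%N -> (j' + k < 2 * pk p r)%N ->
  bform B (Ev g v p r j' *m (g - 1%:M) ^+ k) (v r *m g ^+ j') = (-1) ^+ k.
Proof.
move=> hS; have [gu _ _ _ _] := hS.
elim=> [|k IH] r j' rr jlt.
  by rewrite expr0 mulmx1 (Gdiag0 hS).
rewrite Ev_N // bformBl IH //; last by natlia.
case: (eqVneq (bform B (Ev g v p r j'.+1 *m (g - 1%:M) ^+ k) (v r *m g ^+ j')) 0) => [->|H1].
  by rewrite sub0r exprS mulN1r.
have jlt' : (j'.+1 + k < 2 * pk p r)%N by natlia.
have := Gk hS rr jlt' rr H1; rewrite /gle /= => /orP [h|/andP [h _]]; exfalso; natlia.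
Qed.

Definition idx (p : seq nat) (k : nat) : seq (nat * nat) :=
  [seq (t, j) | t <- iota 1 (size p), j <- iota 0 (2 * pk p t - k)].

Lemma idx_uniq p k : uniq (idx p k).
Proof.
apply: allpairs_uniq_dep; first exact: iota_uniq.
  by move=> t _; apply: iota_uniq.
by move=> [t1 j1] [t2 j2] _ _ /= [-> ->].
Qed.

Lemma mem_idx p k t j : ((t, j) \in idx p k) = (1 <= t <= size p)%N && (j + k < 2 * pk p t)%N.
Proof.
apply/allpairsPdep/andP => [[t' [j' [ht hj [-> ->]]]]|[ht hj]].
  move: ht hj; rewrite !mem_iota add1n ltnS /= => ->.
  by rewrite add0n => H; split => //; rewrite addnC -ltn_subRL.
exists t, j; split => //; rewrite mem_iota ?add1n ?ltnS //.
by rewrite add0n leq0n ltn_subRL addnC.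
Qed.

Lemma size_idx p k : size (idx p k) = sumn [seq (2 * pr - k)%N | pr <- p].
Proof.
rewrite /idx size_allpairs_dep.
have -> : [seq size (iota 0 (2 * pk p x - k)) | x <- iota 1 (size p)] =
          [seq (2 * pk p x - k)%N | x <- iota 1 (size p)].
  by apply: eq_map => x; rewrite size_iota.
rewrite -[in RHS](mkseq_nth 0 p) /mkseq -map_comp.
have -> : iota 1 (size p) = [seq (1 + i)%N | i <- iota 0 (size p)] by rewrite -iotaDl.
by rewrite -map_comp; congr sumn; apply: eq_map => x /=; rewrite /pk add1n.
Qed.

Lemma rank_Sk (K : fieldType) nn (B g : 'M[K]_nn) v p e : Setting B g v p e ->
  forall k, (size (idx p k) <= \rank ((g - 1%:M) ^+ k))%N /\
   ((\rank ((g - 1%:M) ^+ k) <= size (idx p k))%N ->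
    ((g - 1%:M) ^+ k <= spanmx [seq Ev g v p x.1 x.2 *m (g - 1%:M) ^+ k | x <- idx p k])%MS).
Proof.
move=> hS k.
apply: (LT_rank (B := B) (h := fun x => v x.1 *m g ^+ x.2) (le := gle p) (idx_uniq p k) (gle_tord p _)).
- move=> [r j'] [t j]; rewrite !mem_idx => /andP [rr _] /andP [tt jlt] H.
  exact: (Gk hS tt jlt rr H).
- move=> [r j']; rewrite mem_idx => /andP [rr jlt] /=.
  by rewrite (Gkdiag hS rr jlt) signr_eq0.
- by move=> x _; apply: submxMl.
Qed.

Lemma Xsp_E (K : fieldType) nn (g : 'M[K]_nn) v p r : (r <= size p)%N ->
  Xsp g v p r = spanmx [seq Ev g v p r j | j <- iota 0 (2 * pk p r)].
Proof. by move=> rS; rewrite /Xsp rS. Qed.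

Definition kap (P j : nat) : nat := if (j < P)%N then j else (3 * P - 1 - j)%N.

Lemma kap_tord P s : {subset s <= iota 0 (2 * P)} -> tord s (fun i j => (kap P i <= kap P j)%N).
Proof.
move=> sS; split.
- by move=> i j _ _; apply: leq_total.
- by move=> i j l _ _ _; apply: leq_trans.
- move=> i j /sS; rewrite mem_iota add0n => /andP [_ hi] /sS; rewrite mem_iota add0n => /andP [_ hj].
  rewrite /kap; case: ifP => h1; case: ifP => h2 => H1 H2; apply/eqP; natlia.
Qed.

Lemma EvEv (K : fieldType) nn (B g : 'M[K]_nn) v p e : Setting B g v p e ->
  forall r j m, bform B (Ev g v p r j) (Ev g v p r m) = bform B (v r) (v r *m gpow g (m%:Z - j%:Z)).
Proof.
case=> gu hiso _ _ _ r j m.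
rewrite /Ev (bform_shift gu hiso) opprB addrA subrK (bform_movel gu hiso).
by rewrite opprB.
Qed.

Lemma nondeg (K : fieldType) nn (B g : 'M[K]_nn) v p e : Setting B g v p e ->
  forall r x, (1 <= r <= size p)%N -> (x <= Xsp g v p r)%MS ->
  (forall y, (y <= Xsp g v p r)%MS -> bform B y x = 0) -> x = 0.
Proof.
move=> hS r x rr; have [gu hiso [e0 hsym] [hmono hpos] [hcross hself]] := hS.
have rS : (r <= size p)%N by case/andP: rr.
have [hs hs1] := hself r rr.
have P0 := hpos r rr.
set P := pk p r in hs hs1 P0.
rewrite (Xsp_E _ _ rS) => xX Hy.
have [c xE] := span_comb (iota_uniq 0 (2 * P)) xX; rewrite xE.
set pi := fun i => if (i < P)%N then (i + P)%N else (i - P)%N.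
have piS : forall i, (i < 2 * P)%N -> (pi i < 2 * P)%N.
  by move=> i hi; rewrite /pi; case: ifP => h; natlia.
suff c0 : forall j, j \in iota 0 (2 * P) -> c j = 0.
  by rewrite big1_seq // => j /andP [_ /c0 ->]; rewrite scale0r.
apply: (LT (B := B) (f := fun j => Ev g v p r j) (h := fun i => Ev g v p r (pi i))
  (iota_uniq 0 (2 * P)) (kap_tord (s := iota 0 (2 * P)) (fun i h => h))).
- move=> i j; rewrite !mem_iota !add0n => /andP [_ hi] /andP [_ hj].
  rewrite (EvEv hS) /kap /pi -/P.
  case: ifP => h1.
    move=> H; have : ~~ ((i + P < j + P)%N && (j < (i + P) + P)%N).
      by apply: contra H => /andP [a1 a2]; apply/eqP; apply: hs.
    rewrite negb_and => Hn; have hji : (j <= i)%N by case/orP: Hn => Hn; natlia.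
    by rewrite ifT //; apply: leq_ltn_trans hji h1.
  move=> H; have : ~~ (((i - P) < j + P)%N && (j < (i - P) + P)%N).
    by apply: contra H => /andP [a1 a2]; apply/eqP; apply: hs.
  rewrite negb_and => Hn; have hji : (i <= j)%N by case/orP: Hn => Hn; natlia.
  rewrite ifF; last by apply/negbTE; rewrite -leqNgt; apply: leq_trans hji; rewrite leqNgt h1.
  natlia.
- move=> i; rewrite mem_iota add0n => /andP [_ hi] /=.
  rewrite (EvEv hS) /pi -/P; case: ifP => h1.
    by rewrite PoszD addrAC subrr add0r hs1 oner_neq0.
  have hPi : (P <= i)%N by rewrite leqNgt h1.
  rewrite -{2}(subnK hPi) PoszD opprD addrA subrr add0r.
  rewrite -(bform_movel gu hiso) -[X in bform B _ X]mulmx1 hsym mulf_neq0 //.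
  by rewrite mulmx1 -[gpow g P]/(g ^+ P) hs1 oner_neq0.
- move=> i; rewrite mem_iota add0n => /andP [_ hi] /=.
  rewrite -xE hsym Hy ?mulr0 //; apply: mem_span; rewrite mem_iota add0n piS //.
Qed.

Lemma perp_bform (K : fieldType) nn (B X : 'M[K]_nn) y z :
  (y <= perpmx B X)%MS -> (z <= X)%MS -> bform B z y = 0.
Proof.
move=> /sub_kermxP yP /submxP [w ->].
rewrite /bform -!mulmxA.
have -> : X *m (B *m y^T) = 0.
  by rewrite mulmxA -[X *m B]trmxK -trmx_mul yP trmx0.
by rewrite mulmx0 mxE.
Qed.

Lemma part1 (K : fieldType) nn (B g : 'M[K]_nn) v p e : Setting B g v p e ->
  forall r, (1 <= r <= size p)%N ->
  (Xsp g v p r :&: perpmx B (Xsp g v p r) == (0 : 'M[K]_nn))%MS /\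
  (Xsp g v p r + perpmx B (Xsp g v p r) == 1%:M)%MS.
Proof.
move=> hS r rr; set X := Xsp g v p r.
have c0 : (X :&: perpmx B X <= (0 : 'M[K]_nn))%MS.
  apply/row_subP => i; set y := row i _.
  have yC : (y <= X :&: perpmx B X)%MS by apply: row_sub.
  rewrite (nondeg hS rr (x := y)) ?sub0mx //.
    by apply: submx_trans yC (capmxSl _ _).
  by move=> z zX; apply: (perp_bform (X := X)) => //; apply: submx_trans yC (capmxSr _ _).
split; first by rewrite /eqmx c0 sub0mx.
apply/andP; split; first exact: submx1.
rewrite sub1mx /row_full; apply/eqP/anti_leq; rewrite rank_leq_col /=.
have := mxrank_sum_cap X (perpmx B X).
have -> : \rank (X :&: perpmx B X) = 0%N by apply/eqP; rewrite -leqn0 -(mxrank0 K nn nn) mxrankS.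
rewrite addn0 => ->.
rewrite /perpmx mxrank_ker mxrank_tr.
have := mxrankM_maxl X B; have := rank_leq_col (X *m B); natlia.
Qed.

Lemma ortho_mx (K : fieldType) nn (B A C : 'M[K]_nn) :
  (forall x y, (x <= A)%MS -> (y <= C)%MS -> bform B x y = 0) -> A *m B *m C^T = 0.
Proof.
move=> H; rewrite -mulmxA; apply/sub_kermxP/row_subP => i.
apply/sub_kermxP; set x := row i A.
rewrite mulmxA -[x *m B *m C^T]trmxK trmx_mul trmxK.
apply: trmx_inj; rewrite trmxK trmx0.
apply/sub_kermxP/row_subP => j; apply/sub_kermxP; set y := row j C.
rewrite -[y *m (x *m B)^T]trmxK trmx_mul trmxK.
have -> : x *m B *m y^T = 0.
  apply/matrixP => a b; rewrite !ord1 [RHS]mxE.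
  by apply: H; rewrite ?row_sub.
by rewrite trmx0.
Qed.

Lemma stable_inv (K : fieldType) nn (g X : 'M[K]_nn) : g \in unitmx ->
  (X *m g <= X)%MS -> (X *m invmx g <= X)%MS.
Proof.
move=> gu Xg.
have rk : \rank (X *m g) = \rank X by rewrite mxrankMfree // row_free_unit.
have : (X <= X *m g)%MS.
  by have [_ <-] := mxrank_leqif_sup Xg; rewrite rk.
move=> /(submxMr (invmx g)); rewrite mulmxK //.
Qed.

Lemma stable_pow (K : fieldType) nn (g X : 'M[K]_nn) :
  (X *m g <= X)%MS -> forall m, (X *m g ^+ m <= X)%MS.
Proof.
move=> Xg; elim=> [|m IH]; first by rewrite expr0 mulmx1.
rewrite exprSr -mulmxE mulmxA; apply: submx_trans (submxMr _ IH) Xg.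
Qed.

Lemma stable_gpow (K : fieldType) nn (g X : 'M[K]_nn) : g \in unitmx ->
  (X *m g <= X)%MS -> forall i, (X *m gpow g i <= X)%MS.
Proof.
move=> gu Xg [m|m] /=; first exact: stable_pow.
exact: stable_pow (stable_inv gu Xg) m.+1.
Qed.

Lemma stable_N (K : fieldType) nn (g X : 'M[K]_nn) :
  (X *m g <= X)%MS -> forall k, (X *m (g - 1%:M) ^+ k <= X)%MS.
Proof.
move=> Xg; elim=> [|k IH]; first by rewrite expr0 mulmx1.
rewrite exprSr -mulmxE mulmxA; apply: submx_trans (submxMr _ IH) _.
by rewrite mulmxBr mulmx1 addmx_sub // eqmx_opp.
Qed.

Lemma sub_stable (K : fieldType) nn (X M : 'M[K]_nn) (y : 'rV[K]_nn) :
  (X *m M <= X)%MS -> (y <= X)%MS -> (y *m M <= X)%MS.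
Proof. by move=> XM yX; apply: submx_trans (submxMr _ yX) XM. Qed.

Lemma span_mul_sub (K : fieldType) nn (I : eqType) (s : seq I) (F : I -> 'rV[K]_nn) (M Y : 'M[K]_nn) :
  uniq s -> (forall i, i \in s -> (F i *m M <= Y)%MS) -> (spanmx [seq F i | i <- s] *m M <= Y)%MS.
Proof.
move=> us H; apply/row_subP => i; rewrite row_mul.
have [c ->] := span_comb us (row_sub i (spanmx [seq F i | i <- s])).
rewrite mulmx_suml big_seq; apply: summx_sub => j js.
by rewrite -scalemxAl scalemx_sub // H.
Qed.

Lemma bformBr (K : fieldType) nn (B : 'M[K]_nn) x y z :
  bform B z (x - y) = bform B z x - bform B z y.
Proof. by rewrite bformDr -scaleN1r bformZr mulN1r. Qed.

Lemma orth_v (K : fieldType) nn (B g : 'M[K]_nn) v p e : Setting B g v p e ->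
  forall s t z, (1 <= s)%N -> (s < t)%N -> (t <= size p)%N -> (z <= Xsp g v p s)%MS ->
  bform B z (v t) = 0.
Proof.
move=> hS s t z s1 st tS; have [gu hiso _ _ [hcross _]] := hS.
have sS : (s <= size p)%N by apply: leq_trans (ltnW st) tS.
rewrite Xsp_E // => /(span_comb (iota_uniq _ _)) [c ->].
rewrite bform_suml big1_seq // => j /andP [_]; rewrite mem_iota add0n => /andP [_ hj].
rewrite bformZl /Ev hcross ?mulr0 //; natlia.
Qed.

Lemma orth_cross (K : fieldType) nn (B g : 'M[K]_nn) v p e : Setting B g v p e ->
  forall s t, (1 <= s)%N -> (s < t)%N -> (t <= size p)%N ->
  (Xsp g v p s *m g <= Xsp g v p s)%MS ->
  forall w i, (w <= Xsp g v p s)%MS -> bform B w (v t *m gpow g i) = 0.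
Proof.
move=> hS s t s1 st tS Xg w i wX; have [gu hiso _ _ _] := hS.
rewrite -[i]opprK -(bform_movel gu hiso) (orth_v hS s1 st tS) //.
by apply: sub_stable wX; apply: stable_gpow.
Qed.

Lemma orth_XX (K : fieldType) nn (B g : 'M[K]_nn) v p e : Setting B g v p e ->
  forall s t, (1 <= s)%N -> (s < t)%N -> (t <= size p)%N ->
  (Xsp g v p s *m g <= Xsp g v p s)%MS ->
  forall w z, (w <= Xsp g v p s)%MS -> (z <= Xsp g v p t)%MS -> bform B w z = 0.
Proof.
move=> hS s t s1 st tS Xg w z wX; rewrite Xsp_E // => /(span_comb (iota_uniq _ _)) [c ->].
rewrite bform_sumr big1_seq // => j _.
by rewrite bformZr /Ev (orth_cross hS s1 st tS Xg) ?mulr0.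
Qed.

Lemma Wzero (K : fieldType) nn (B g : 'M[K]_nn) v p e : Setting B g v p e ->
  forall t u, (t <= (size p).+1)%N ->
  (forall s, (1 <= s)%N -> (s < t)%N -> (Xsp g v p s *m g <= Xsp g v p s)%MS) ->
  (u <= \sum_(s <- iota 1 (t - 1)) Xsp g v p s)%MS ->
  (forall s w, (1 <= s)%N -> (s < t)%N -> (w <= Xsp g v p s)%MS -> bform B w u = 0) ->
  u = 0.
Proof.
move=> hS t u tS Hst Hu Horth; have [gu hiso [e0 hsym] _ _] := hS.
have [w [Hw uE]] := sums_dec (iota_uniq 1 (t - 1)) Hu.
have memI s : (s \in iota 1 (t - 1)) = (1 <= s)%N && (s < t)%N.
  rewrite mem_iota; apply/andP/andP => [] [h1 h2]; split => //; natlia.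
suff w0 : forall s, s \in iota 1 (t - 1) -> w s = 0.
  by rewrite uE big1_seq // => s /andP [_ /w0].
move=> s0 s0in; have := s0in; rewrite memI => /andP [s01 s0t].
have s0S : (s0 <= size p)%N by natlia.
apply: (nondeg hS (r := s0)); first by rewrite s01.
  exact: Hw.
move=> y yX; have := Horth s0 y s01 s0t yX.
rewrite uE bform_sumr (bigD1_seq s0) ?iota_uniq //= big1_seq ?addr0 //.
move=> s /andP [ns0 sin]; move: (sin); rewrite memI => /andP [s1 st].
have sS : (s <= size p)%N by natlia.
case: (ltngtP s0 s) => h; last by rewrite h eqxx in ns0.
  by apply: (orth_XX hS s01 h sS) => //; [apply: Hst | apply: Hw].
by rewrite hsym (orth_XX hS s1 h s0S) ?mulr0 //; [apply: Hst | apply: Hw].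
Qed.

Lemma perp_N (K : fieldType) nn (B g : 'M[K]_nn) v p e : Setting B g v p e ->
  forall (X : 'M[K]_nn) y, (X *m g <= X)%MS -> (forall w, (w <= X)%MS -> bform B w y = 0) ->
  forall k w, (w <= X)%MS -> bform B w (y *m (g - 1%:M) ^+ k) = 0.
Proof.
move=> hS X y Xg Hy; have [gu hiso _ _ _] := hS.
elim=> [|k IH] w wX; first by rewrite expr0 mulmx1 Hy.
rewrite exprSr -mulmxE mulmxA mulmxBr mulmx1 bformBr IH // subr0.
rewrite -(mulmxKV gu w) hiso IH //.
by apply: sub_stable wX; apply: stable_inv.
Qed.

Lemma prefix_claim (K : fieldType) nn (g : 'M[K]_nn) v p t : g \in unitmx ->
  forall m, (Ev g v p t 0 *m (g - 1%:M) ^+ m - Ev g v p t m <= spanmx [seq Ev g v p t j | j <- iota 0 m])%MS.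
Proof.
move=> gu; elim=> [|m IH]; first by rewrite expr0 mulmx1 subrr sub0mx.
set z := Ev g v p t 0 *m (g - 1%:M) ^+ m - Ev g v p t m in IH.
have E1 : Ev g v p t 0 *m (g - 1%:M) ^+ m.+1 - Ev g v p t m.+1 = z *m g - z - Ev g v p t m.
  rewrite exprSr -mulmxE mulmxA.
  have -> : Ev g v p t 0 *m (g - 1%:M) ^+ m = z + Ev g v p t m by rewrite /z subrK.
  rewrite mulmxBr mulmx1 mulmxDl Ev_g // opprD addrA (addrAC (z *m g)) (addrAC (z *m g - z)) addrK.
  by [].
have LS : (spanmx [seq Ev g v p t j | j <- iota 0 m] <= spanmx [seq Ev g v p t j | j <- iota 0 m.+1])%MS.
  rewrite /spanmx !big_map; apply: sums_sub => j jm; rewrite genmxE.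
  by have := mem_span (Ev g v p t) (_ : j \in iota 0 m.+1); rewrite /spanmx big_map; apply; rewrite mem_iota add0n ltnS; move: jm; rewrite mem_iota add0n => /andP [_ /ltnW].
rewrite E1; apply: addmx_sub; first apply: addmx_sub.
- have [c ->] := span_comb (iota_uniq 0 m) IH.
  rewrite mulmx_suml big_seq; apply: summx_sub => j jm.
  rewrite -scalemxAl scalemx_sub // Ev_g //; apply: mem_span.
  by move: jm; rewrite !mem_iota !add0n ltnS => /andP [_ ->].
- by rewrite eqmx_opp (submx_trans IH LS).
- by rewrite eqmx_opp; apply: mem_span; rewrite mem_iota add0n ltnS leqnn.
Qed.

Lemma Ev_in (K : fieldType) nn (g : 'M[K]_nn) v p t j : (t <= size p)%N -> (j < 2 * pk p t)%N ->
  (Ev g v p t j <= Xsp g v p t)%MS.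
Proof. by move=> tS jl; rewrite Xsp_E //; apply: mem_span; rewrite mem_iota add0n. Qed.

Lemma stab_step (K : fieldType) nn (B g : 'M[K]_nn) v p e : Setting B g v p e ->
  (forall k, (1 <= k)%N -> \rank ((g - 1%:M) ^+ k) = size (idx p k)) ->
  forall t, (1 <= t <= size p)%N ->
  (forall s, (1 <= s)%N -> (s < t)%N -> (Xsp g v p s *m g <= Xsp g v p s)%MS) ->
  (Xsp g v p t *m g <= Xsp g v p t)%MS.
Proof.
move=> hS Hrk t tt Hst; have [gu hiso _ [hmono hpos] _] := hS.
have [t1 tS] := andP tt.
have P0 := hpos t tt.
set k := (2 * pk p t)%N.
have k1 : (1 <= k)%N by rewrite /k; natlia.
set u := Ev g v p t 0 *m (g - 1%:M) ^+ k.
have [_ HS] := rank_Sk hS k.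
have uS := submx_trans (submxMl (Ev g v p t 0) _) (HS (eq_leq (Hrk k k1))).
rewrite -/u in uS.
have u0 : u = 0.
  apply: (Wzero hS (t := t)) => //; first by rewrite ltnW.
    apply: submx_trans uS _; rewrite /spanmx big_map; apply: sums_sub => -[t' j'].
    rewrite mem_idx => /andP [/andP [t'1 t'S] hj]; rewrite genmxE /=.
    have t't : (t' < t)%N.
      rewrite ltnNge; apply/negP => tt'; have := hmono t t' t1 tt' t'S; rewrite /k in hj; natlia.
    apply: submx_trans (mem_sums _ (_ : t' \in iota 1 (t - 1))).
      by apply: sub_stable; [apply: stable_N; apply: Hst | apply: Ev_in => //; natlia].
    by rewrite mem_iota t'1 /=; natlia.
  move=> s w s1 st wX; apply: (perp_N hS (Hst s s1 st)) => // w' w'X.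
  by rewrite /Ev (orth_cross hS s1 st tS (Hst s s1 st)).
have EX : (Ev g v p t k <= Xsp g v p t)%MS.
  have := prefix_claim v p t gu k; rewrite -/u u0 sub0r eqmx_opp -Xsp_E //.
rewrite Xsp_E //; apply: span_mul_sub; first exact: iota_uniq.
move=> j; rewrite mem_iota add0n => /andP [_ jl]; rewrite Ev_g //.
case: (ltnP j.+1 k) => h; first by apply: mem_span; rewrite mem_iota add0n.
have -> : j.+1 = k by apply/eqP; rewrite eqn_leq h jl.
by rewrite Xsp_E in EX.
Qed.

Lemma all_stable (K : fieldType) nn (B g : 'M[K]_nn) v p e : Setting B g v p e ->
  (forall k, (1 <= k)%N -> \rank ((g - 1%:M) ^+ k) = size (idx p k)) ->
  forall t, (1 <= t <= size p)%N -> (Xsp g v p t *m g <= Xsp g v p t)%MS.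
Proof.
move=> hS Hrk; elim/ltn_ind => t IH tt.
apply: (stab_step hS Hrk tt) => s s1 st; apply: IH => //.
by rewrite s1 /=; case/andP: tt => _ ?; natlia.
Qed.

Lemma odd_stable (K : fieldType) nn (B g : 'M[K]_nn) v p e : Setting B g v p e ->
  (forall k, (1 <= k)%N -> \rank ((g - 1%:M) ^+ k) = size (idx p k)) ->
  forall y, (forall t j, (1 <= t <= size p)%N -> (j < 2 * pk p t)%N -> bform B (Ev g v p t j) y = 0) ->
  y *m g = y.
Proof.
move=> hS Hrk y Hy; have [gu hiso _ [hmono hpos] _] := hS.
have Hst := all_stable hS Hrk.
set u := y *m (g - 1%:M) ^+ 1.
have [_ HS] := rank_Sk hS 1.
have uS := submx_trans (submxMl y _) (HS (eq_leq (Hrk 1%N isT))).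
rewrite -/u in uS.
have u0 : u = 0.
  apply: (Wzero hS (t := (size p).+1)) => //.
  - by move=> s s1 st; apply: Hst; rewrite s1.
  - apply: submx_trans uS _; rewrite /spanmx big_map; apply: sums_sub => -[t' j'].
    rewrite mem_idx => /andP [/andP [t'1 t'S] hj]; rewrite genmxE /=.
    apply: submx_trans (mem_sums _ (_ : t' \in iota 1 ((size p).+1 - 1))).
      by apply: sub_stable; [apply: stable_N; apply: Hst; rewrite t'1 | apply: Ev_in => //; natlia].
    by rewrite mem_iota t'1 /=; natlia.
  move=> s w s1 st wX; apply: (perp_N hS (Hst s _)) => //; first by rewrite s1.
  move=> w' w'X; have sS : (s <= size p)%N by natlia.
  move: w'X; rewrite Xsp_E // => /(span_comb (iota_uniq _ _)) [c ->].
  rewrite bform_suml big1_seq // => j /andP [_]; rewrite mem_iota add0n => /andP [_ hj].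
  by rewrite bformZl Hy ?mulr0 // s1.
by move: u0; rewrite /u expr1 mulmxBr mulmx1 => /eqP; rewrite subr_eq0 => /eqP.
Qed.

Lemma Xlast (K : fieldType) nn (g : 'M[K]_nn) v p x :
  (x <= Xsp g v p (size p).+1)%MS -> (exists a, x = a *: v (size p).+1) /\ ((~~ odd nn) -> x = 0).
Proof.
rewrite /Xsp ltnn; case: ifP => Ho.
  by rewrite genmxE => /sub_rVP [a ->]; split => //; exists a.
by rewrite submx0 => /eqP ->; split => //; exists 0; rewrite scale0r.
Qed.

Lemma orth_all (K : fieldType) nn (B g : 'M[K]_nn) v p e : Setting B g v p e ->
  (forall k, (1 <= k)%N -> \rank ((g - 1%:M) ^+ k) = size (idx p k)) ->
  (odd nn -> forall t j, (1 <= t <= size p)%N -> (j < 2 * pk p t)%N -> bform B (Ev g v p t j) (v (size p).+1) = 0) ->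
  forall r r' x y, (1 <= r <= (size p).+1)%N -> (1 <= r' <= (size p).+1)%N -> r != r' ->
  (x <= Xsp g v p r)%MS -> (y <= Xsp g v p r')%MS -> bform B x y = 0.
Proof.
move=> hS Hrk Hodd.
have [_ _ [e0 hsym] _ _] := hS.
suff H : forall r r' x y, (1 <= r)%N -> (r < r')%N -> (r' <= (size p).+1)%N ->
  (x <= Xsp g v p r)%MS -> (y <= Xsp g v p r')%MS -> bform B x y = 0.
  move=> r r' x y /andP [r1 rS] /andP [r'1 r'S] nrr' xX yX.
  case: (ltngtP r r') => h; last by rewrite h eqxx in nrr'.
    exact: H xX yX.
  by rewrite hsym (H r' r y x) ?mulr0.
move=> r r' x y r1 rr' r'S xX yX.
have rS : (r <= size p)%N by natlia.
case: (ltnP r' (size p).+1) => h.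
  by apply: (orth_XX hS r1 rr' _ (all_stable hS Hrk _)) => //; rewrite r1.
have er' : r' = (size p).+1 by apply/eqP; rewrite eqn_leq r'S h.
subst r'; have [[a ya] yeven] := Xlast yX.
case: (boolP (odd nn)) => Ho; last by rewrite yeven // bform0r.
rewrite ya bformZr; move: xX; rewrite Xsp_E // => /(span_comb (iota_uniq _ _)) [c ->].
rewrite bform_suml big1_seq ?mulr0 // => j /andP [_]; rewrite mem_iota add0n => /andP [_ hj].
by rewrite bformZl Hodd ?mulr0 // r1.
Qed.

Lemma int_range1 (a b P : nat) : (b <= a + P)%N -> (a < b + P)%N -> - P%:Z <= a%:Z - b%:Z <= P%:Z - 1.
Proof.
move=> h1 h2; apply/andP; split.
  by rewrite -sub0r (zle 0 P a b) add0n.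
by rewrite (zle a b P 1) addn1 addnC.
Qed.

Lemma int_range2 (a b P : nat) : (a < b + P)%N -> (b < a + P)%N -> `|a%:Z - b%:Z| <= P%:Z - 1.
Proof.
move=> h1 h2; rewrite ler_norml opprB; apply/andP; split.
  by rewrite (zle 1 P a b) add1n.
by rewrite (zle a b P 1) addn1 addnC.
Qed.

Lemma mk_setting (K : fieldType) nn (B : 'M[K]_nn) Q (g : 'M[K]_nn) (v : nat -> 'rV[K]_nn) p :
  form_data B Q -> partition_of p nn -> in_Is B Q g ->
  (forall t r, (1 <= t)%N -> (t < r)%N -> (r <= size p)%N ->
          forall i : int, - (pk p t)%:Z <= i <= (pk p t)%:Z - 1 ->
          bform B (v t *m gpow g i) (v r) = 0) ->
  (forall r, (1 <= r <= size p)%N ->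
          [/\ (forall i : int, `|i| <= (pk p r)%:Z - 1 -> bform B (v r) (v r *m gpow g i) = 0),
              Q (v r) = 0 & bform B (v r) (v r *m g ^+ pk p r) = 1]) ->
  exists e, Setting B g v p e.
Proof.
move=> hform [hsort [hpos _]] [gu hiso _] hcross hself.
have [e [e0 hsym]] := form_sym hform.
exists e; split => //; last split.
- split.
    move=> t r t1 tr rS; rewrite /pk.
    have := @sorted_leq_nth _ geq (fun a b c h1 h2 => leq_trans h2 h1) (@leqnn) 0 p hsort t.-1 r.-1.
    by apply; rewrite ?inE; natlia.
  move=> t /andP [t1 tS]; rewrite /pk; move/all_nthP: hpos; apply; natlia.
- move=> t r t1 tr rS a b h1 h2; apply: hcross => //.
  exact: int_range1.
- move=> r rr; have [h1 _ h3] := hself r rr; split => // a b H1 H2.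
  by apply: h1; apply: int_range2.
Qed.

Lemma sumn_double (p : seq nat) : sumn [seq (2 * pr - 0)%N | pr <- p] = (2 * sumn p)%N.
Proof. by elim: p => //= a l ->; rewrite subn0 mulnDr. Qed.

Lemma Lambda0 p nn : sumn p = nn./2 -> Lambda p nn 0 = nn.
Proof.
move=> hs; rewrite /Lambda sumn_double hs subn0 addnC -{3}(odd_double_half nn).
by rewrite mulnC muln2.
Qed.

Lemma LambdaS p nn k : (1 <= k)%N -> Lambda p nn k = size (idx p k).
Proof.
move=> k1; rewrite /Lambda size_idx.
have -> : (odd nn - k = 0)%N by apply/eqP; rewrite subn_eq0; case: (odd nn) => //.
by rewrite addn0.
Qed.

Theorem mainTheorem6 (K : closedFieldType) (nn : nat) (hn : (3 <= nn)%N)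
  (B : 'M[K]_nn) (Q : 'rV[K]_nn -> K) (hform : form_data B Q)
  (Vf Vf' : nat -> 'M[K]_nn) (hF : in_flagF B Q Vf) (hF' : in_flagF B Q Vf')
  (p : seq nat) (hp : partition_of p nn)
  (hrel : relpos_is Vf Vf' (wp p nn))
  (g : 'M[K]_nn) (hg : in_Is B Q g)
  (hgV : forall i, (i <= nn)%N -> (Vf i *m g == Vf' i)%MS)
  (v : nat -> 'rV[K]_nn)
  (hV : forall r, (1 <= r <= size p)%N -> forall i, (i <= pk p r)%N ->
          (Vf (plt p r + i)%N ==
             (\sum_(1 <= k < r) Zsp g v p k) + spanmx [seq v r *m g ^+ j | j <- iota 0 i])%MS)
  (hcross : forall t r, (1 <= t)%N -> (t < r)%N -> (r <= size p)%N ->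
          forall i : int, - (pk p t)%:Z <= i <= (pk p t)%:Z - 1 ->
          bform B (v t *m gpow g i) (v r) = 0)
  (hself : forall r, (1 <= r <= size p)%N ->
          [/\ (forall i : int, `|i| <= (pk p r)%:Z - 1 -> bform B (v r) (v r *m gpow g i) = 0),
              Q (v r) = 0 & bform B (v r) (v r *m g ^+ pk p r) = 1])
  (hodd : odd nn ->
          (forall t, (1 <= t <= size p)%N ->
             forall i : int, - (pk p t)%:Z <= i <= (pk p t)%:Z - 1 ->
             bform B (v t *m gpow g i) (v (size p).+1) = 0)
          /\ Q (v (size p).+1) = 1) :
  (* (1) *)
  (forall r, (1 <= r <= size p)%N ->
     (Xsp g v p r :&: perpmx B (Xsp g v p r) == (0 : 'M[K]_nn))%MS /\
     (Xsp g v p r + perpmx B (Xsp g v p r) == 1%:M)%MS)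
  /\
  ((exists m, (g - 1%:M) ^+ m = 0) ->
     (* (2) *)
     (forall k, (Lambda p nn k <= \rank ((g - 1%:M) ^+ k))%N)
     /\ \rank ((g - 1%:M) ^+ 0) = Lambda p nn 0
     /\
     (* (3) *)
     ((forall k, \rank ((g - 1%:M) ^+ k) = Lambda p nn k) ->
        (forall r, (1 <= r <= (size p).+1)%N -> (Xsp g v p r *m g <= Xsp g v p r)%MS)
        /\ (forall r r', (1 <= r <= (size p).+1)%N -> (1 <= r' <= (size p).+1)%N ->
              r != r' -> Xsp g v p r *m B *m (Xsp g v p r')^T = 0))).
Proof.
have [e hS] := mk_setting hform hp hg hcross hself.
have [_ [_ hsum]] := hp.
have hL0 : \rank ((g - 1%:M) ^+ 0) = Lambda p nn 0.
  by rewrite Lambda0 // expr0 mxrank1.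
split; first exact: part1 hS.
move=> _; split.
  case=> [|k]; first by rewrite hL0.
  by rewrite LambdaS //; have [] := rank_Sk hS k.+1.
split=> // Hrank.
have Hrk : forall k, (1 <= k)%N -> \rank ((g - 1%:M) ^+ k) = size (idx p k).
  by move=> k k1; rewrite Hrank LambdaS.
have Hodd : odd nn -> forall t j, (1 <= t <= size p)%N -> (j < 2 * pk p t)%N ->
    bform B (Ev g v p t j) (v (size p).+1) = 0.
  move=> Ho t j tt hj; have [H _] := hodd Ho; rewrite /Ev H //.
  apply: int_range1; natlia.
split.
  move=> r /andP [r1 rS]; case: (ltnP r (size p).+1) => h.
    by apply: (all_stable hS Hrk); rewrite r1.
  have er : r = (size p).+1 by apply/eqP; rewrite eqn_leq rS h.
  subst r; rewrite /Xsp ltnn; case: ifP => Ho; last by rewrite mul0mx sub0mx.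
  rewrite (eqmxMr _ (genmxE _)) genmxE (odd_stable hS Hrk) //.
  by move=> t j tt hj; apply: Hodd.
move=> r r' rr rr' nrr'; apply: ortho_mx => x y xX yX.
exact: (orth_all hS Hrk Hodd rr rr' nrr' xX yX).
Qed.
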